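(* Let $\mathcal{A}$ be an additive category and let $(\mathcal{E}_\omega)_{\omega\in\Omega}$ be a nonempty family of exact structures on $\mathcal{A}$. Then the intersection $\bigcap_{\omega\in\Omega}\mathcal{E}_\omega=\{\xi : \xi\in\mathcal{E}_\omega\text{ for all }\omega\in\Omega\}$ is an exact structure on $\mathcal{A}$.
   Context: An exact structure (in the sense of Quillen) on an additive category $\mathcal{A}$ is a class $\mathcal{E}$ of kernel–cokernel pairs $(i,d)$ (i.e. $i$ is a kernel of $d$ and $d$ is a cokernel of $i$), closed under isomorphisms, such that: identities are admissible monics and admissible epics; admissible monics are closed under composition, and so are admissible epics; the pushout of an admissible monic along an arbitrary morphism exists and is an admissible monic; the pullback of an admissible epic along an arbitrary morphism exists and is an admissible epic. Here an admissible monic is a morphism $i$ with $(i,d)\in\mathcal{E}$ for some $d$, and an admissible epic is a morphism $d$ with $(i,d)\in\mathcal{E}$ for some $i$. *)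

(* Defs.v *)
From HB Require Import structures.
From mathcomp Require Import all_boot all_algebra.
Set Implicit Arguments. Unset Strict Implicit. Unset Printing Implicit Defensive.
Import GRing.Theory.
Local Open Scope ring_scope.

(** Additive category: Ab-enriched (preadditive) category with a zero object
    and binary biproducts.  [comp g f] is "g after f". *)
Record AddCat := {
  obj :> Type;
  mor : obj -> obj -> zmodType;
  comp : forall a b c : obj, mor b c -> mor a b -> mor a c;
  idm : forall a : obj, mor a a;
  comp_assoc : forall a b c d (h : mor c d) (g : mor b c) (f : mor a b),
      comp h (comp g f) = comp (comp h g) f;
  comp_id_l : forall a b (f : mor a b), comp (idm b) f = f;
  comp_id_r : forall a b (f : mor a b), comp f (idm a) = f;
  comp_addl : forall a b c (g g' : mor b c) (f : mor a b),
      comp (g + g') f = comp g f + comp g' f;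
  comp_addr : forall a b c (g : mor b c) (f f' : mor a b),
      comp g (f + f') = comp g f + comp g f';
  (* zero object: an object whose identity is the zero morphism *)
  has_zero : exists z : obj, idm z = 0;
  has_biprod : forall a b : obj, exists (p : obj) (i1 : mor a p) (i2 : mor b p)
      (p1 : mor p a) (p2 : mor p b),
      [/\ comp p1 i1 = idm a, comp p2 i2 = idm b, comp p1 i2 = 0,
          comp p2 i1 = 0 & comp i1 p1 + comp i2 p2 = idm p]
}.

Arguments comp {a0 a b c} _ _.
Arguments idm {a0} a.

Section ExactDefs.
Variable A : AddCat.

Definition pair_class := forall a b c : A, mor a b -> mor b c -> Prop.

Definition is_kernel (a b c : A) (i : mor a b) (d : mor b c) : Prop :=
  comp d i = 0 /\
  forall (x : A) (f : mor x b), comp d f = 0 -> exists! g : mor x a, comp i g = f.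

Definition is_cokernel (a b c : A) (i : mor a b) (d : mor b c) : Prop :=
  comp d i = 0 /\
  forall (y : A) (f : mor b y), comp f i = 0 -> exists! g : mor c y, comp g d = f.

Definition kernel_cokernel_pair (a b c : A) (i : mor a b) (d : mor b c) : Prop :=
  is_kernel i d /\ is_cokernel i d.

Definition is_iso (a b : A) (f : mor a b) : Prop :=
  exists g : mor b a, comp g f = idm a /\ comp f g = idm b.

Definition adm_monic (E : pair_class) (a b : A) (i : mor a b) : Prop :=
  exists (c : A) (d : mor b c), E a b c i d.

Definition adm_epic (E : pair_class) (b c : A) (d : mor b c) : Prop :=
  exists (a : A) (i : mor a b), E a b c i d.

Definition is_pushout (a b a' b' : A) (i : mor a b) (f : mor a a')
  (i' : mor a' b') (f' : mor b b') : Prop :=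
  comp f' i = comp i' f /\
  forall (y : A) (u : mor b y) (v : mor a' y), comp u i = comp v f ->
    exists! w : mor b' y, comp w f' = u /\ comp w i' = v.

Definition is_pullback (b c b' c' : A) (d : mor b c) (g : mor c' c)
  (d' : mor b' c') (g' : mor b' b) : Prop :=
  comp d g' = comp g d' /\
  forall (x : A) (u : mor x b) (v : mor x c'), comp d u = comp g v ->
    exists! w : mor x b', comp g' w = u /\ comp d' w = v.

Definition exact_structure (E : pair_class) : Prop :=
  (forall a b c (i : mor a b) (d : mor b c), E a b c i d -> kernel_cokernel_pair i d) /\
  (forall a b c (i : mor a b) (d : mor b c) a' b' c' (i' : mor a' b') (d' : mor b' c')
            (fa : mor a a') (fb : mor b b') (fc : mor c c'),
        is_iso fa -> is_iso fb -> is_iso fc ->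
        comp fb i = comp i' fa -> comp fc d = comp d' fb ->
        E a b c i d -> E a' b' c' i' d') /\
  (forall a : A, adm_monic E (idm a) /\ adm_epic E (idm a)) /\
  ((forall a b c (f : mor a b) (g : mor b c),
        adm_monic E f -> adm_monic E g -> adm_monic E (comp g f)) /\
     (forall a b c (f : mor a b) (g : mor b c),
        adm_epic E f -> adm_epic E g -> adm_epic E (comp g f))) /\
  (forall a b a' (i : mor a b) (f : mor a a'), adm_monic E i ->
        exists (b' : A) (i' : mor a' b') (f' : mor b b'),
          is_pushout i f i' f' /\ adm_monic E i') /\
  (forall b c c' (d : mor b c) (g : mor c' c), adm_epic E d ->
        exists (b' : A) (d' : mor b' c') (g' : mor b' b),
          is_pullback d g d' g' /\ adm_epic E d').

End ExactDefs.

(* Main.v *)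
Require Import Defs.
From HB Require Import structures.
From mathcomp Require Import all_boot all_algebra.
Set Implicit Arguments. Unset Strict Implicit.
Local Open Scope ring_scope.
Local Notation comp := Defs.comp.

Section Aux.
Variable A : AddCat.

Lemma uniq2 {T} (P : T -> Prop) x y : (exists! z, P z) -> P x -> P y -> x = y.
Proof. move=> [z [_ H]] Px Py; by rewrite -(H x Px) -(H y Py). Qed.

Lemma iso_id (a : A) : is_iso (idm a).
Proof. exists (idm a); by rewrite comp_id_l. Qed.

Lemma coker_iso (a b c c' : A) (i : mor a b) (d : mor b c) (d' : mor b c') :
  is_cokernel i d -> is_cokernel i d' -> exists g : mor c c', is_iso g /\ comp g d = d'.
Proof.
case=> d0 Hd [d'0 Hd'].
have [g [gd _]] := Hd _ d' d'0.
have [h [hd _]] := Hd' _ d d0.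
exists g; split=> //; exists h; split.
- apply: (uniq2 (Hd _ d d0)); by rewrite ?comp_id_l // -comp_assoc gd hd.
- apply: (uniq2 (Hd' _ d' d'0)); by rewrite ?comp_id_l // -comp_assoc hd gd.
Qed.

Lemma ker_iso (a a' b c : A) (i : mor a b) (i' : mor a' b) (d : mor b c) :
  is_kernel i d -> is_kernel i' d -> exists g : mor a a', is_iso g /\ comp i' g = i.
Proof.
case=> d0 Hd [d'0 Hd'].
have [g [gi _]] := Hd' _ i d0.
have [h [hi _]] := Hd _ i' d'0.
exists g; split=> //; exists h; split.
- apply: (uniq2 (Hd _ i d0)); by rewrite ?comp_id_r // comp_assoc hi gi.
- apply: (uniq2 (Hd' _ i' d'0)); by rewrite ?comp_id_r // comp_assoc gi hi.
Qed.

Variable E : pair_class A.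
Hypothesis HE : exact_structure E.

Lemma E_coker (a b c c' : A) (i : mor a b) (d : mor b c) (d' : mor b c') :
  @E a b c i d -> is_cokernel i d' -> @E a b c' i d'.
Proof.
move: HE => [kc [isoc _]] Hid Hd'.
have [g [gi gd]] := coker_iso (proj2 (kc _ _ _ _ _ Hid)) Hd'.
apply: (isoc _ _ _ i d _ _ _ i d' (idm a) (idm b) g) => //; try exact: iso_id.
- by rewrite comp_id_l comp_id_r.
- by rewrite comp_id_r.
Qed.

Lemma E_ker (a a' b c : A) (i : mor a b) (i' : mor a' b) (d : mor b c) :
  @E a b c i d -> is_kernel i' d -> @E a' b c i' d.
Proof.
move: HE => [kc [isoc _]] Hid Hi'.
have [g [gi gd]] := ker_iso (proj1 (kc _ _ _ _ _ Hid)) Hi'.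
apply: (isoc _ _ _ i d _ _ _ i' d g (idm b) (idm c)) => //; try exact: iso_id.
- by rewrite comp_id_l gd.
- by rewrite comp_id_l comp_id_r.
Qed.

Lemma E_tr_monic (a b b' c : A) (i : mor a b) (d : mor b c) (psi : mor b b') :
  @E a b c i d -> is_iso psi -> adm_monic E (comp psi i).
Proof.
move: HE => [kc [isoc _]] Hid [psi' [H1 H2]].
exists c, (comp d psi').
apply: (isoc _ _ _ i d _ _ _ _ _ (idm a) psi (idm c)) => //; try exact: iso_id.
all: first [by exists psi'; split | by rewrite comp_id_r | by rewrite comp_id_l -comp_assoc H1 comp_id_r].
Qed.

Lemma E_tr_epic (a b b' c : A) (i : mor a b) (d : mor b c) (phi : mor b' b) :
  @E a b c i d -> is_iso phi -> adm_epic E (comp d phi).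
Proof.
move: HE => [kc [isoc _]] Hid [phi' [H1 H2]].
exists a, (comp phi' i).
apply: (isoc _ _ _ i d _ _ _ _ _ (idm a) phi' (idm c)) => //; try exact: iso_id.
all: first [by exists phi; split | by rewrite comp_id_r | by rewrite comp_id_l -comp_assoc H2 comp_id_r].
Qed.

End Aux.

Lemma po_iso (A : AddCat) (a b a' b0 b1 : A) (i : mor a b) (f : mor a a')
  (i0 : mor a' b0) (f0 : mor b b0) (i1 : mor a' b1) (f1 : mor b b1) :
  is_pushout i f i0 f0 -> is_pushout i f i1 f1 ->
  exists psi : mor b1 b0, is_iso psi /\ comp psi i1 = i0.
Proof.
case=> c0 U0 [c1 U1].
have [phi [[p1 p2] _]] := U0 _ f1 i1 c1.
have [psi [[q1 q2] _]] := U1 _ f0 i0 c0.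
exists psi; split=> //; exists phi; split.
- apply: (uniq2 (U1 _ f1 i1 c1)); by rewrite ?comp_id_l // -!comp_assoc ?q1 ?q2 ?p1 ?p2.
- apply: (uniq2 (U0 _ f0 i0 c0)); by rewrite ?comp_id_l // -!comp_assoc ?q1 ?q2 ?p1 ?p2.
Qed.

Lemma pb_iso (A : AddCat) (b c c' b0 b1 : A) (d : mor b c) (g : mor c' c)
  (d0 : mor b0 c') (g0 : mor b0 b) (d1 : mor b1 c') (g1 : mor b1 b) :
  is_pullback d g d0 g0 -> is_pullback d g d1 g1 ->
  exists phi : mor b0 b1, is_iso phi /\ comp d1 phi = d0.
Proof.
case=> c0 U0 [c1 U1].
have [phi [[p1 p2] _]] := U1 _ g0 d0 c0.
have [psi [[q1 q2] _]] := U0 _ g1 d1 c1.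
exists phi; split=> //; exists psi; split.
- apply: (uniq2 (U0 _ g0 d0 c0)); by rewrite ?comp_id_r // !comp_assoc ?q1 ?q2 ?p1 ?p2.
- apply: (uniq2 (U1 _ g1 d1 c1)); by rewrite ?comp_id_r // !comp_assoc ?q1 ?q2 ?p1 ?p2.
Qed.


Theorem lemma5p2 (A : AddCat) (Omega : Type) (E : Omega -> pair_class A) :
  inhabited Omega ->
  (forall w : Omega, exact_structure (E w)) ->
  exact_structure (fun (a b c : A) (i : mor a b) (d : mor b c) =>
                     forall w : Omega, E w a b c i d).
Proof.
move=> [w0] HE.
have Hm : forall w a b (i : mor a b),
    adm_monic (fun a b c i d => forall w, E w a b c i d) i -> adm_monic (E w) i.
  by move=> w a b i [c [d H]]; exists c, d.
have He : forall w b c (d : mor b c),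
    adm_epic (fun a b c i d => forall w, E w a b c i d) d -> adm_epic (E w) d.
  by move=> w b c d [a [i H]]; exists a, i.
have kc0 := proj1 (HE w0).
split; first by move=> a b c i d H; exact: kc0 _ _ _ _ _ (H w0).
split.
  move=> a b c i d a' b' c' i' d' fa fb fc h1 h2 h3 h4 h5 H w.
  have [_ [isoc _]] := HE w; exact: isoc h1 h2 h3 h4 h5 (H w).
split.
  move=> a; have [[c [d H0]] [a' [i H0']]] := proj1 (proj2 (proj2 (HE w0))) a.
  split.
  - exists c, d => w; have [[c1 [d1 H1]] _] := proj1 (proj2 (proj2 (HE w))) a.
    refine (E_coker (HE w) H1 _); exact: (proj2 (kc0 _ _ _ _ _ H0)).
  - exists a', i => w; have [_ [a1 [i1 H1]]] := proj1 (proj2 (proj2 (HE w))) a.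
    refine (E_ker (HE w) H1 _); exact: (proj1 (kc0 _ _ _ _ _ H0')).
split; first split.
- move=> a b c f g hf hg.
  have [c0 [d0 H0]] := (proj1 (proj1 (proj2 (proj2 (proj2 (HE w0)))))) _ _ _ f g (Hm w0 _ _ _ hf) (Hm w0 _ _ _ hg).
  exists c0, d0 => w.
  have [c1 [d1 H1]] := (proj1 (proj1 (proj2 (proj2 (proj2 (HE w)))))) _ _ _ f g (Hm w _ _ _ hf) (Hm w _ _ _ hg).
  refine (E_coker (HE w) H1 _); exact: (proj2 (kc0 _ _ _ _ _ H0)).
- move=> a b c f g hf hg.
  have [c0 [d0 H0]] := (proj2 (proj1 (proj2 (proj2 (proj2 (HE w0)))))) _ _ _ f g (He w0 _ _ _ hf) (He w0 _ _ _ hg).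
  exists c0, d0 => w.
  have [c1 [d1 H1]] := (proj2 (proj1 (proj2 (proj2 (proj2 (HE w)))))) _ _ _ f g (He w _ _ _ hf) (He w _ _ _ hg).
  refine (E_ker (HE w) H1 _); exact: (proj1 (kc0 _ _ _ _ _ H0)).
split.
- move=> a b a' i f hi.
  have [b' [i' [f' [Hpo [c' [d' H0]]]]]] := proj1 (proj2 (proj2 (proj2 (proj2 (HE w0))))) _ _ _ i f (Hm w0 _ _ _ hi).
  exists b', i', f'; split=> //; exists c', d' => w.
  have [b1 [i1 [f1 [Hpo1 [c1 [d1 H1]]]]]] := proj1 (proj2 (proj2 (proj2 (proj2 (HE w))))) _ _ _ i f (Hm w _ _ _ hi).
  have [psi [Hpsi Hc]] := po_iso Hpo Hpo1.
  have := E_tr_monic (HE w) H1 Hpsi; rewrite Hc => -[c2 [d2 H2]].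
  refine (E_coker (HE w) H2 _); exact: (proj2 (kc0 _ _ _ _ _ H0)).
- move=> b c c' d g hd.
  have [b' [d' [g' [Hpb [a' [i' H0]]]]]] := proj2 (proj2 (proj2 (proj2 (proj2 (HE w0))))) _ _ _ d g (He w0 _ _ _ hd).
  exists b', d', g'; split=> //; exists a', i' => w.
  have [b1 [d1 [g1 [Hpb1 [a1 [i1 H1]]]]]] := proj2 (proj2 (proj2 (proj2 (proj2 (HE w))))) _ _ _ d g (He w _ _ _ hd).
  have [phi [Hphi Hc]] := pb_iso Hpb Hpb1.
  have := E_tr_epic (HE w) H1 Hphi; rewrite Hc => -[a2 [i2 H2]].
  refine (E_ker (HE w) H2 _); exact: (proj1 (kc0 _ _ _ _ _ H0)).
Qed.
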